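(* Let $H$ be a Hopf algebra over a field $\mathbb{k}$ containing a subalgebra $P$ which is either a polynomial algebra $\mathbb{k}[x]$ or a Laurent polynomial algebra $\mathbb{k}[x^{\pm1}]$, such that $H$ is finitely generated as a right $P$-module. Let $N$ be a positive integer and $q_1(x),\dots,q_N(x)\in P$ pairwise coprime. Then $\bigcap_{\alpha=1}^N(q_\alpha(x))=\big(\prod_{\alpha=1}^Nq_\alpha(x)\big)$ as left ideals of $H$.
   Context: For $h\in H$, $(h)=Hh$ denotes the principal left ideal of $H$ generated by $h$. *)

(* Defs.v *)
From HB Require Import structures.
From mathcomp Require Import all_boot all_order all_algebra.
Set Implicit Arguments. Unset Strict Implicit. Unset Printing Implicit Defensive.
Import Order.TTheory GRing.Theory Num.Theory.
Local Open Scope ring_scope.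

Section HopfDefs.
Variables (k : fieldType) (H : algType k).

Definition bilinear_form (b : H -> H -> k) : Prop :=
  (forall c x x' y, b (c *: x + x') y = c * b x y + b x' y) /\
  (forall c x y y', b x (c *: y + y') = c * b x y + b x y').

Definition trilinear_form (t : H -> H -> H -> k) : Prop :=
  (forall c x x' y z, t (c *: x + x') y z = c * t x y z + t x' y z) /\
  (forall c x y y' z, t x (c *: y + y') z = c * t x y z + t x y' z) /\
  (forall c x y z z', t x y (c *: z + z') = c * t x y z + t x y z').

(* An element sum_i a_i (x) b_i of H (x)_k H is represented by the list of
   pairs (a_i, b_i); two representatives denote the same tensor iff every
   bilinear form takes the same value on them ((H (x) H)^* = Bil(H,H;k)). *)
Definition tensor_eq (s t : seq (H * H)) : Prop :=
  forall b, bilinear_form b ->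
    \sum_(p <- s) b p.1 p.2 = \sum_(p <- t) b p.1 p.2.

Definition tensor3_eq (s t : seq (H * H * H)) : Prop :=
  forall tr, trilinear_form tr ->
    \sum_(p <- s) tr p.1.1 p.1.2 p.2 = \sum_(p <- t) tr p.1.1 p.1.2 p.2.

Record is_hopf (D : H -> seq (H * H)) (e : H -> k) (S : H -> H) : Prop := {
  hopf_D_lin : forall c a b,
    tensor_eq (D (c *: a + b)) ([seq (c *: p.1, p.2) | p <- D a] ++ D b);
  hopf_D_mul : forall a b,
    tensor_eq (D (a * b)) [seq (p.1 * r.1, p.2 * r.2) | p <- D a, r <- D b];
  hopf_D_one : tensor_eq (D 1) [:: (1, 1)];
  hopf_coassoc : forall h,
    tensor3_eq [seq (r.1, r.2, p.2) | p <- D h, r <- D p.1]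
               [seq (p.1, r.1, r.2) | p <- D h, r <- D p.2];
  hopf_e_lin : forall c a b, e (c *: a + b) = c * e a + e b;
  hopf_e_mul : forall a b, e (a * b) = e a * e b;
  hopf_e_one : e 1 = 1;
  hopf_counit_l : forall h, \sum_(p <- D h) e p.1 *: p.2 = h;
  hopf_counit_r : forall h, \sum_(p <- D h) e p.2 *: p.1 = h;
  hopf_S_lin : forall c a b, S (c *: a + b) = c *: S a + S b;
  hopf_antipode_l : forall h, \sum_(p <- D h) S p.1 * p.2 = e h *: 1;
  hopf_antipode_r : forall h, \sum_(p <- D h) p.1 * S p.2 = e h *: 1
}.

Definition peval (p : {poly k}) (x : H) : H := (map_poly (in_alg H) p).[x].

Definition is_poly_subalg (P : H -> Prop) (x : H) : Prop :=
  (forall h, P h <-> exists p : {poly k}, h = peval p x) /\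
  (forall p : {poly k}, peval p x = 0 -> p = 0).

Definition is_laurent_subalg (P : H -> Prop) (x : H) : Prop :=
  exists xi : H, x * xi = 1 /\ xi * x = 1 /\
  (forall h, P h <-> exists (p : {poly k}) (n : nat), h = peval p x * xi ^+ n) /\
  (forall p : {poly k}, peval p x = 0 -> p = 0).

Definition fg_right_module (P : H -> Prop) : Prop :=
  exists gs : seq H, forall h, exists ps : seq H,
    (forall i, P ps`_i) /\ h = \sum_(i < size gs) gs`_i * ps`_i.

Definition coprime_in (P : H -> Prop) (a b : H) : Prop :=
  forall d, P d ->
    (exists r, P r /\ a = d * r) -> (exists r, P r /\ b = d * r) ->
    exists u, P u /\ d * u = 1 /\ u * d = 1.

End HopfDefs.

Definition lideal (H : ringType) (h : H) : H -> Prop := fun y => exists a, y = a * h.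

(* Main.v *)
Require Import Defs.
From HB Require Import structures.
From mathcomp Require Import all_boot all_order all_algebra ring.
From Stdlib Require Import ClassicalEpsilon.
Import Order.TTheory GRing.Theory Num.Theory.
Local Open Scope ring_scope.

Section Aux.
Variables (k : fieldType) (H : algType k).
Implicit Types (p r : {poly k}) (x y : H).

Lemma pevalE p x : peval p x = horner_alg x p.
Proof. by []. Qed.

Lemma pevalM p r x : peval (p * r) x = peval p x * peval r x.
Proof. by rewrite !pevalE rmorphM. Qed.
Lemma peval1 x : peval 1 x = 1.
Proof. by rewrite pevalE rmorph1. Qed.
Lemma pevalD p r x : peval (p + r) x = peval p x + peval r x.
Proof. by rewrite !pevalE rmorphD. Qed.
Lemma pevalB p r x : peval (p - r) x = peval p x - peval r x.
Proof. by rewrite !pevalE rmorphB. Qed.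
Lemma pevalXn m x : peval 'X^m x = x ^+ m.
Proof. by rewrite pevalE rmorphXn /= horner_algX. Qed.
Lemma peval_comm p r x : peval p x * peval r x = peval r x * peval p x.
Proof. by rewrite -!pevalM mulrC. Qed.
Lemma peval_commr z p x : GRing.comm z x -> GRing.comm z (peval p x).
Proof.
move=> czx; rewrite /peval; apply: commr_horner => // i.
by rewrite coef_map /= comm_alg.
Qed.
Lemma peval_prod (I : Type) (s : seq I) (F : I -> {poly k}) x :
  peval (\prod_(i <- s) F i) x = \prod_(i <- s) peval (F i) x.
Proof. by rewrite pevalE rmorph_prod. Qed.
Definition Uok x m := exists z, x ^+ m * z = 1 /\ GRing.comm z x.
Definition Rel x p r := exists a b m, a * p + b * r = 'X^m /\ Uok x m.

Lemma Uok_add x m1 m2 : Uok x m1 -> Uok x m2 -> Uok x (m1 + m2).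
Proof.
move=> [z1 [h1 c1]] [z2 [h2 c2]]; exists (z2 * z1); split.
  by rewrite exprD -mulrA (mulrA (x ^+ m2)) h2 mul1r.
rewrite /GRing.comm -mulrA c1 !mulrA c2 //.
Qed.

Lemma Rel_mul x p1 p2 r : Rel x p1 r -> Rel x p2 r -> Rel x (p1 * p2) r.
Proof.
move=> [a1 [b1 [m1 [E1 U1]]]] [a2 [b2 [m2 [E2 U2]]]].
exists (a1 * a2), (b1 * a2 * p2 + a1 * p1 * b2 + b1 * b2 * r), (m1 + m2).
split; last exact: Uok_add.
by rewrite exprD -E1 -E2; ring.
Qed.

Lemma Rel1 x r : Rel x 1 r.
Proof.
exists 1, 0, 0%N; split; first by rewrite mul1r mul0r addr0 expr0.
by exists 1; split; rewrite ?expr0 ?mulr1 // /GRing.comm mul1r mulr1.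
Qed.

Lemma two x y A B u v : y = u * peval A x -> y = v * peval B x -> Rel x A B ->
  lideal (peval (A * B) x) y.
Proof.
move=> yu yv [a [b [m [E [z [hz cz]]]]]].
have e1 : y * peval a x * peval A x = v * peval a x * peval (A * B) x.
  by rewrite {1}yv -!mulrA -!pevalM; congr (v * peval _ x); ring.
have e2 : y * peval b x * peval B x = u * peval b x * peval (A * B) x.
  by rewrite {1}yu -!mulrA -!pevalM; congr (u * peval _ x); ring.
exists ((v * peval a x + u * peval b x) * z).
have cz' : GRing.comm z (peval (A * B) x) by apply: peval_commr.
rewrite -mulrA cz' mulrA mulrDl -e1 -e2 -!mulrA -mulrDr -!pevalM -pevalD E.
by rewrite pevalXn -mulrA hz mulr1.
Qed.

Lemma Rel_prod x (I : eqType) (s : seq I) (p : I -> {poly k}) r :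
  (forall j, j \in s -> Rel x (p j) r) -> Rel x (\prod_(j <- s) p j) r.
Proof.
elim: s => [|j s IH] h; first by rewrite big_nil; exact: Rel1.
rewrite big_cons; apply: Rel_mul; first by apply: h; rewrite inE eqxx.
by apply: IH => j' hj; apply: h; rewrite inE hj orbT.
Qed.

Lemma core x N (p : 'I_N -> {poly k})
  (pr : forall i j, i != j -> Rel x (p i) (p j)) y
  (hy : forall i, lideal (peval (p i) x) y) (s : seq 'I_N) :
  uniq s -> lideal (peval (\prod_(i <- s) p i) x) y.
Proof.
elim: s => [|i s IH] /=.
  by move=> _; rewrite big_nil peval1; exists y; rewrite mulr1.
case/andP=> nis us; rewrite big_cons mulrC.
have [u yu] := IH us; have [v yv] := hy i.
apply: (two x y _ _ u v yu yv); apply: Rel_prod => j hj; apply: pr.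
apply/eqP => eji; move: nis; rewrite -eji.
by rewrite hj.
Qed.

Lemma cop_rel (P : H -> Prop) x xi
  (H3 : forall h, P h <-> exists p n, h = peval p x * xi ^+ n)
  (H4 : forall p m, peval p x * xi ^+ m = 1 -> exists m', peval p x = x ^+ m' /\ Uok x m')
  (H5 : forall p, peval p x = 0 -> p = 0)
  p1 n1 p2 n2 :
  coprime_in P (peval p1 x * xi ^+ n1) (peval p2 x * xi ^+ n2) -> Rel x p1 p2.
Proof.
move=> hc; set g := gcdp p1 p2.
have Pd : P (peval g x) by apply/H3; exists g, 0%N; rewrite expr0 mulr1.
have dv : forall (pp : {poly k}) (nn : nat), g %| pp -> exists r0 : H, P r0 /\ peval pp x * xi ^+ nn = peval g x * r0.
  move=> pp nn gp; exists (peval (pp %/ g) x * xi ^+ nn); split.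
    by apply/H3; exists (pp %/ g), nn.
  by rewrite mulrA -pevalM mulrC divpK.
have [u [Pu [du _]]] := hc _ Pd (dv _ _ (dvdp_gcdl p1 p2)) (dv _ _ (dvdp_gcdr p1 p2)).
have [r [m eu]] := (H3 u).1 Pu; rewrite eu in du.
move: du; rewrite mulrA -pevalM => /H4 [m' [hm Um]].
have gr : g * r = 'X^m'.
  by apply/eqP; rewrite -subr_eq0; apply/eqP/H5; rewrite pevalB hm pevalXn subrr.
have [[u1 u2] /eqpP [[c1 c2] /andP [c1n c2n] /= E]] := Bezoutp p1 p2.
exists ((c1 / c2) *: (u1 * r)), ((c1 / c2) *: (u2 * r)), m'; split => //.
rewrite -!mul_polyC in E *.
have -> : (c1 / c2)%:P * (u1 * r) * p1 + (c1 / c2)%:P * (u2 * r) * p2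
        = c2^-1%:P * (c1%:P * (u1 * p1 + u2 * p2)) * r.
  by rewrite polyCM; ring.
by rewrite E mulrA -polyCM mulVf // mul1r -/g.
Qed.

Lemma prod_split x xi (cx : GRing.comm xi x) (I : Type) (s : seq I) (p : I -> {poly k}) (n : I -> nat) :
  \prod_(i <- s) (peval (p i) x * xi ^+ n i) = peval (\prod_(i <- s) p i) x * xi ^+ (\sum_(i <- s) n i).
Proof.
elim: s => [|i s IH]; first by rewrite !big_nil peval1 expr0 mulr1.
rewrite !big_cons IH pevalM exprD.
have c : GRing.comm (xi ^+ n i) (peval (\prod_(j <- s) p j) x).
  by apply: peval_commr; apply/commr_sym/commrX/commr_sym.
by rewrite -!mulrA (mulrA (xi ^+ n i)) c -!mulrA.
Qed.

Lemma lideal_unit x xi (cx : GRing.comm xi x) (winv : forall n, exists w, w * xi ^+ n = 1) p n y :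
  lideal (peval p x * xi ^+ n) y <-> lideal (peval p x) y.
Proof.
have c : GRing.comm (xi ^+ n) (peval p x).
  by apply: peval_commr; apply/commr_sym/commrX/commr_sym.
split => [[a ->]|[a ->]]; first by exists (a * xi ^+ n); rewrite -c mulrA.
have [w hw] := winv n; exists (a * w).
by rewrite -mulrA -c (mulrA w) hw mul1r.
Qed.

Lemma main_gen (P : H -> Prop) x xi (cx : GRing.comm xi x)
  (winv : forall n, exists w, w * xi ^+ n = 1)
  (H3 : forall h, P h <-> exists p n, h = peval p x * xi ^+ n)
  (H4 : forall p m, peval p x * xi ^+ m = 1 -> exists m', peval p x = x ^+ m' /\ Uok x m')
  (H5 : forall p, peval p x = 0 -> p = 0)
  (N : nat) (q : 'I_N -> H)
  (hqP : forall i, P (q i))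
  (hcop : forall i j : 'I_N, i != j -> coprime_in P (q i) (q j)) :
  forall y : H, (forall i, lideal (q i) y) <-> lideal (\prod_(i < N) q i) y.
Proof.
move=> y.
have hq : forall i, exists pn : {poly k} * nat, q i = peval pn.1 x * xi ^+ pn.2.
  by move=> i; have [p [n e]] := (H3 _).1 (hqP i); exists (p, n).
pose f := fun i => proj1_sig (constructive_indefinite_description _ (hq i)).
have ef : forall i, q i = peval (f i).1 x * xi ^+ (f i).2.
  by move=> i; exact: (proj2_sig (constructive_indefinite_description _ (hq i))).
have eprod : \prod_(i < N) q i =
    peval (\prod_(i < N) (f i).1) x * xi ^+ (\sum_(i < N) (f i).2).
  by rewrite (eq_bigr _ (fun i _ => ef i)); exact: prod_split.
rewrite eprod lideal_unit //.
have pr : forall i j, i != j -> Rel x (f i).1 (f j).1.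
  move=> i j nij; apply: (@cop_rel P x xi H3 H4 H5 _ (f i).2 _ (f j).2).
  by rewrite -!ef; apply: hcop.
split.
  move=> hy; apply: (@core x N _ pr y _ _ (index_enum_uniq _)) => i.
  by rewrite -(lideal_unit _ _ cx winv _ (f i).2) -ef.
move=> [a ->] i; rewrite ef lideal_unit // (bigD1 i) //= pevalM.
by exists (a * peval (\prod_(j < N | j != i) (f j).1) x); rewrite (peval_comm (f i).1) mulrA.
Qed.
End Aux.

Theorem lemma2p10 (k : fieldType) (H : algType k)
  (D : H -> seq (H * H)) (e : H -> k) (S : H -> H)
  (hopfH : is_hopf D e S)
  (P : H -> Prop)
  (hP : exists x : H, is_poly_subalg P x \/ is_laurent_subalg P x)
  (hfg : fg_right_module P)
  (N : nat) (hN : (0 < N)%N) (q : 'I_N -> H)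
  (hqP : forall i, P (q i))
  (hcop : forall i j : 'I_N, i != j -> coprime_in P (q i) (q j)) :
  forall y : H, (forall i, lideal (q i) y) <-> lideal (\prod_(i < N) q i) y.
Proof.
have [x [[hP1 hP2] | [xi [h1 [h2 [hP1 hP2]]]]]] := hP.
- apply: (@main_gen k H P x 1) => //.
  + by rewrite /GRing.comm mul1r mulr1.
  + by move=> n; exists 1; rewrite expr1n mulr1.
  + move=> h; rewrite hP1; split => [[p ->]|[p [n ->]]].
      by exists p, 0%N; rewrite expr0 mulr1.
    by exists p; rewrite expr1n mulr1.
  + move=> p m; rewrite expr1n mulr1 => ->; exists 0%N; split; first by rewrite expr0.
    by exists 1; rewrite expr0 mulr1; split => //; rewrite /GRing.comm mul1r mulr1.
- have cx : GRing.comm xi x by rewrite /GRing.comm h1 h2.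
  have cx' : GRing.comm x xi by rewrite /GRing.comm h1 h2.
  apply: (@main_gen k H P x xi) => //.
  + by move=> n; exists (x ^+ n); rewrite -exprMn_comm // h1 expr1n.
  + move=> p m hm; exists m; split.
      by rewrite -[peval p x]mulr1 -(expr1n _ m) -h2 exprMn_comm // mulrA hm mul1r.
    exists (xi ^+ m); split; first by rewrite -exprMn_comm // h1 expr1n.
    by apply/commr_sym/commrX/commr_sym.
Qed.
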